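(* Run Algorithm 1 with sample size $pn=\frac{n}{e}$, and let $T$ be the set of all tentatively selected items, i.e. the set of items $j$ that arrive in some round $\ell\ge\lceil n/e\rceil$ and satisfy $j\in\mathcal{A}(U^{\le \ell})$ (regardless of whether they are accepted). Then $\mathbb{E}[v(T)]\ge\left(\frac{\alpha}{e}-\frac{\alpha}{n}\right)v(\mathrm{OPT})$.
   Context: Submodular secretary setting. Let $U$ be a finite ground set of $n$ items and $k\ge1$ an integer. Let $v\colon 2^U\to\mathbb{R}_{\ge0}$ be monotone ($S\subseteq T\Rightarrow v(S)\le v(T)$) and submodular ($v(S\cup\{x\})-v(S)\ge v(T\cup\{x\})-v(T)$ for all $S\subseteq T\subseteq U$, $x\in U\setminus T$). Let $\mathrm{OPT}\in\arg\max\{v(S): S\subseteq U, |S|\le k\}$. The items arrive one per round (rounds $1,\dots,n$) in a uniformly random order; for $\ell\in[n]$, $U^{\le \ell}$ denotes the set of items arriving in rounds $1,\dots,\ell$. $\mathcal{A}$ is an offline algorithm that, for every $L\subseteq U$, returns a set $\mathcal{A}(L)\subseteq L$ with $|\mathcal{A}(L)|\le k$ and $v(\mathcal{A}(L))\ge \alpha\max\{v(T):T\subseteq L,|T|\le k\}$, where $\alpha\in(0,1]$; the output $\mathcal{A}(L)$ depends only on the set $L$ (not on the arrival order). Algorithm 1 with sample size $pn$: it rejects the items arriving in rounds $1,\dots,\lceil pn\rceil-1$; in each round $\ell\ge\lceil pn\rceil$, with arriving item $j$, it computes $S^{(\ell)}=\mathcal{A}(U^{\le\ell})$; $j$ is called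 tentatively selected if $j\in S^{(\ell)}$; if $j$ is tentatively selected and fewer than $k$ items have been accepted so far, $j$ is accepted, otherwise rejected. *)

(* Defs.v *)
From mathcomp Require Import all_boot all_fingroup.
From Stdlib Require Import Reals.
Set Implicit Arguments. Unset Strict Implicit. Unset Printing Implicit Defensive.

(* Ground set U = the finite type T, n = #|T|.
   An arrival order is a permutation s : {perm T}; the item arriving in
   round i+1 (i : 'I_#|T|, 0-indexed) is s (enum_val i).
   pos s x = 0-indexed round of arrival of x (x arrives in round pos s x + 1). *)
Definition pos (T : finType) (s : {perm T}) (x : T) : nat :=
  nat_of_ord (enum_rank ((s^-1)%g x)).

Definition prefix_set (T : finType) (s : {perm T}) (l : nat) : {set T} :=
  [set x | pos s x < l].

(* ceiling of a real number, as a nat (negative values map to 0) *)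
Definition ceil_nat (x : R) : nat := Z.to_nat (1 - up (- x))%Z.

Definition tentative (T : finType) (A : {set T} -> {set T}) (c : nat)
  (s : {perm T}) : {set T} :=
  [set x | (c <= (pos s x).+1) && (x \in A (prefix_set s (pos s x).+1))].

Definition expect_perm (T : finType) (f : {perm T} -> R) : R :=
  Rdiv (\big[Rplus/0%R]_(s : {perm T}) f s) (INR #|{perm T}|).

Definition monotone_fn (T : finType) (v : {set T} -> R) : Prop :=
  forall S U : {set T}, S \subset U -> Rle (v S) (v U).

Definition submodular_fn (T : finType) (v : {set T} -> R) : Prop :=
  forall (S U : {set T}) (x : T), S \subset U -> x \notin U ->
    Rge (Rminus (v (x |: S)) (v S)) (Rminus (v (x |: U)) (v U)).

(* Main.v *)
From HB Require Import structures.
From mathcomp Require Import all_boot all_fingroup.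
From Stdlib Require Import Reals Lra Lia ZArith.
Require Import Defs.
Set Implicit Arguments. Unset Strict Implicit. Unset Printing Implicit Defensive.

Lemma Rplus_0_l' : left_id 0%R Rplus. Proof. move=> x; lra. Qed.
Lemma Rplus_assoc' : associative Rplus. Proof. move=> x y z; lra. Qed.
Lemma Rplus_comm' : commutative Rplus. Proof. move=> x y; lra. Qed.
HB.instance Definition _ := Monoid.isComLaw.Build R 0%R Rplus
  Rplus_assoc' Rplus_comm' Rplus_0_l'.

Notation "\sumR_ ( i | P ) F" := (\big[Rplus/0%R]_(i | P) F)
  (at level 41, F at level 41, i at level 50).
Notation "\sumR_ ( i 'in' A ) F" := (\big[Rplus/0%R]_(i in A) F)
  (at level 41, F at level 41, i at level 50).
Notation "\sumR_ ( i : T ) F" := (\big[Rplus/0%R]_(i : T) F)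
  (at level 41, F at level 41, i at level 50).

Lemma sumR_le (I : finType) (P : pred I) (F G : I -> R) :
  (forall i, P i -> Rle (F i) (G i)) ->
  Rle (\big[Rplus/0%R]_(i | P i) F i) (\big[Rplus/0%R]_(i | P i) G i).
Proof.
move=> H; apply: (big_ind2 (fun a b => Rle a b)) => //; first lra.
move=> *; lra.
Qed.

Lemma sumR_const (I : finType) (A : {pred I}) (c : R) :
  \big[Rplus/0%R]_(i in A) c = Rmult (INR #|A|) c.
Proof.
rewrite big_const; elim: #|A| => [|k IH] /=; first lra.
rewrite IH; case: k {IH} => [|k] /=; lra.
Qed.

Lemma sumR_scale (I : finType) (P : pred I) (F : I -> R) (c : R) :
  \big[Rplus/0%R]_(i | P i) Rmult c (F i) = Rmult c (\big[Rplus/0%R]_(i | P i) F i).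
Proof.
apply: (big_rec2 (fun a b => a = Rmult c b)); first lra.
move=> i a b _ ->; lra.
Qed.

Lemma sumR_split (I : finType) (P : pred I) (F G : I -> R) :
  \big[Rplus/0%R]_(i | P i) (F i + G i)%R =
  (\big[Rplus/0%R]_(i | P i) F i + \big[Rplus/0%R]_(i | P i) G i)%R.
Proof. exact: big_split. Qed.

Lemma sumR_ge0 (I : finType) (P : pred I) (F : I -> R) :
  (forall i, P i -> Rle 0 (F i)) -> Rle 0 (\big[Rplus/0%R]_(i | P i) F i).
Proof.
move=> H; apply: (big_ind (fun a => Rle 0 a)) => //; first lra.
move=> *; lra.
Qed.

Lemma sum_perm_mul (T : finType) (t : {perm T}) (F : {perm T} -> R) :
  \big[Rplus/0%R]_(s : {perm T}) F s = \big[Rplus/0%R]_(s : {perm T}) F (t * s)%g.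
Proof. exact: (reindex_inj (mulgI t)). Qed.

Lemma sumR_constT (I : finType) (c : R) :
  \big[Rplus/0%R]_(i : I) c = Rmult (INR #|I|) c.
Proof. by rewrite -sumR_const. Qed.

Lemma card_ord_lt (n k : nat) : k <= n -> #|[set i : 'I_n | i < k]| = k.
Proof.
elim: k => [|k IH] Hk.
  by apply/eqP; rewrite cards_eq0; apply/eqP/setP => i; rewrite !inE.
have -> : [set i : 'I_n | i < k.+1] = (Ordinal Hk) |: [set i : 'I_n | i < k].
  by apply/setP => i; rewrite !inE ltnS leq_eqVlt -val_eqE.
by rewrite cardsU1 inE /= ltnn IH // ltnW.
Qed.

Lemma big_setU1R (I : finType) (a : I) (B : {set I}) (F : I -> R) :
  a \notin B ->
  \big[Rplus/0%R]_(i in a |: B) F i = (F a + \big[Rplus/0%R]_(i in B) F i)%R.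
Proof. exact: big_setU1. Qed.

Lemma bigD1R (I : finType) (j : I) (P : pred I) (F : I -> R) :
  P j ->
  \big[Rplus/0%R]_(i | P i) F i = (F j + \big[Rplus/0%R]_(i | P i && (i != j)) F i)%R.
Proof. exact: bigD1. Qed.

Lemma sumR0 (I : finType) (P : pred I) (F : I -> R) :
  (forall i, P i -> F i = 0%R) -> \big[Rplus/0%R]_(i | P i) F i = 0%R.
Proof. exact: big1. Qed.

Section Comb.
Variable T : finType.
Implicit Types (s : {perm T}) (x y : T).

Definition tsuf (A : {set T} -> {set T}) s m : {set T} :=
  [set x | (m <= pos s x) && (x \in A (prefix_set s (pos s x).+1))].

Lemma tentative_tsuf A c s : tentative A c s = tsuf A s c.-1.
Proof. by apply/setP => x; rewrite !inE; case: c. Qed.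

Lemma tsuf_split A s m :
  tsuf A s m = tsuf A s m.+1 :|: [set x | (pos s x == m) && (x \in A (prefix_set s m.+1))].
Proof.
apply/setP => x; rewrite !inE.
case: (ltngtP m (pos s x)) => H.
- by rewrite /= orbF.
- by [].
- by rewrite /= H.
Qed.

Lemma pos_mul t s x : pos (t * s)%g x = enum_rank (t^-1%g (s^-1%g x)).
Proof. by rewrite /pos invgM permM. Qed.

Section Swap.
Variables (m : nat) (Hm : m < #|T|).
Let z : T := enum_val (Ordinal Hm).
Definition slots : {set T} := [set y | enum_rank y < m.+1].

Lemma z_rank : nat_of_ord (enum_rank z) = m.
Proof. by rewrite /z enum_valK. Qed.

Lemma z_slot : z \in slots.
Proof. by rewrite inE z_rank. Qed.

Lemma pos_swap y s x : y \in slots ->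
  ((pos (tperm y z * s)%g x <= m) = (pos s x <= m)) /\
  (m < pos s x -> pos (tperm y z * s)%g x = pos s x).
Proof.
rewrite inE ltnS => Hy; rewrite pos_mul tpermV /pos.
set w := (s^-1)%g x.
case: (tpermP y z w) => [->|->|Hwy Hwz].
- by rewrite z_rank Hy leqnn; split=> // H; move: (leq_trans H Hy); rewrite ltnn.
- by rewrite z_rank Hy leqnn; split=> // H; rewrite ltnn in H.
- by [].
Qed.

Lemma prefix_swap y s p : y \in slots -> m < p ->
  prefix_set (tperm y z * s)%g p = prefix_set s p.
Proof.
move=> Hy Hp; apply/setP => x; rewrite !inE.
have [H1 H2] := pos_swap s x Hy.
case: (leqP (pos s x) m) => H.
- have H' : pos (tperm y z * s)%g x <= m by rewrite H1.
  by rewrite (leq_ltn_trans H Hp) (leq_ltn_trans H' Hp).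
- by rewrite H2.
Qed.

Lemma tsuf_swap A y s : y \in slots ->
  tsuf A (tperm y z * s)%g m.+1 = tsuf A s m.+1.
Proof.
move=> Hy; apply/setP => x; rewrite !inE.
have [H1 H2] := pos_swap s x Hy.
case: (leqP (pos s x) m) => H.
- have H' : pos (tperm y z * s)%g x <= m by rewrite H1.
  by rewrite ltnNge H'.
- by rewrite H2 // H /= prefix_swap // ltnS ltnW.
Qed.

Lemma pos_swap_eq y s x : (pos (tperm y z * s)%g x == m) = (x == s y).
Proof.
rewrite pos_mul tpermV /pos -z_rank.
have -> : (nat_of_ord (enum_rank (tperm y z ((s^-1)%g x))) == nat_of_ord (enum_rank z))
   = (tperm y z ((s^-1)%g x) == z).
  by apply/eqP/eqP => [/val_inj/(can_inj enum_rankK)|->].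
rewrite -[X in _ == X](tpermL y z).
apply/eqP/eqP => [/perm_inj H|->]; last by rewrite permK.
by rewrite -H permKV.
Qed.


Lemma card_slots : #|slots| = m.+1.
Proof.
have -> : slots = [set enum_val i | i in [set i : 'I_#|T| | i < m.+1]].
  apply/setP => y; rewrite inE; apply/idP/imsetP => [Hy|[i Hi ->]].
  - by exists (enum_rank y); rewrite ?inE ?enum_rankK.
  - by rewrite enum_valK; rewrite inE in Hi.
by rewrite card_imset ?card_ord_lt //; exact: enum_val_inj.
Qed.

Variables (v : {set T} -> R) (Hmon : monotone_fn v) (Hsub : submodular_fn v).

Lemma subm_sum (B Rs : {set T}) :
  Rle (v (Rs :|: B) - v Rs)%R (\big[Rplus/0%R]_(x in B) (v (x |: Rs) - v Rs)%R).
Proof.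
elim: {B}#|B| {-2}B (eqxx #|B|) => [|k IH] B HB.
  rewrite cards_eq0 in HB; rewrite (eqP HB) big_set0 setU0. lra.
have [x Hx] : exists x, x \in B.
  by apply/set0Pn; rewrite -card_gt0 (eqP HB).
rewrite -(setD1K Hx) big_setU1R ?setD11 //.
have HB' : #|B :\ x| == k by rewrite (cardsD1 x B) Hx add1n eqSS in HB.
have := IH _ HB'.
rewrite setUCA.
case: (boolP (x \in Rs :|: B :\ x)) => Hin.
- have -> : x |: (Rs :|: B :\ x) = Rs :|: B :\ x by apply/setUidPr; rewrite sub1set.
  have := Hmon (subsetUr [set x] Rs). lra.
- have := Hsub (subsetUl Rs (B :\ x)) Hin; lra.
Qed.

Variable (A : {set T} -> {set T}) (HA : forall L, A L \subset L).

Lemma step_gain :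
  Rge (Rmult (INR m.+1)
        (\big[Rplus/0%R]_(s : {perm T}) (v (tsuf A s m) - v (tsuf A s m.+1))%R))
      (\big[Rplus/0%R]_(s : {perm T}) (v (A (prefix_set s m.+1)) - v (tsuf A s m.+1))%R).
Proof.
have -> : INR m.+1 = INR #|slots| by rewrite card_slots.
rewrite -sumR_const.
under eq_bigr => y Hy do rewrite (sum_perm_mul (tperm y z)).
rewrite exchange_big /=.
apply: Rle_ge; apply: sumR_le => s _.
set L := prefix_set s m.+1; set Rs := tsuf A s m.+1.
set f := fun x => (v (Rs :|: (if x \in A L then [set x] else set0)) - v Rs)%R.
have E1 : forall y, y \in slots ->
   (v (tsuf A (tperm y z * s)%g m) - v (tsuf A (tperm y z * s)%g m.+1))%R = f (s y).
  move=> y Hy; rewrite /f tsuf_split tsuf_swap // prefix_swap //; congr (v _ - _)%R.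
  congr (_ :|: _); apply/setP => x; rewrite inE (pos_swap_eq y s x).
  rewrite -/L; case: (eqVneq x (s y)) => [->|Hne] /=; case: (s y \in A L) => //;
    by rewrite inE ?eqxx ?(negbTE Hne).
rewrite (eq_bigr _ E1).
have E2 : \big[Rplus/0%R]_(y in slots) f (s y) = \big[Rplus/0%R]_(x in L) f x.
  rewrite [RHS](reindex_inj (@perm_inj _ s)); apply: eq_bigl => y.
  by rewrite !inE /pos permK.
rewrite E2.
have E3 : \big[Rplus/0%R]_(x in L) f x = \big[Rplus/0%R]_(x in A L) (v (x |: Rs) - v Rs)%R.
  rewrite big_mkcond [RHS]big_mkcond; apply: eq_bigr => x _; rewrite /f.
  case: (boolP (x \in A L)) => Hx.
  - by rewrite (subsetP (HA L) _ Hx) setUC.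
  - by case: (x \in L); rewrite // setU0; lra.
rewrite E3.
have := subm_sum (A L) Rs; have := Hmon (subsetUr Rs (A L)); lra.
Qed.


Lemma tperm_eq_x (x y w : T) : (tperm x y w == y) = (w == x).
Proof.
rewrite -[X in _ == X](tpermL x y).
by apply/eqP/eqP => [/perm_inj|->].
Qed.

Lemma sum_ind_eq (P : pred T) (w : T) :
  \big[Rplus/0%R]_(y | P y) (if w == y then 1 else 0)%R = (if P w then 1 else 0)%R.
Proof.
case: (boolP (P w)) => Hw.
- rewrite (@bigD1R _ w P (fun y => if w == y then 1 else 0)%R Hw) eqxx sumR0; first lra.
  by move=> y /andP[_ Hy]; rewrite eq_sym (negbTE Hy).
- apply: sumR0 => y Hy; case: eqP => // E; by rewrite E Hy in Hw.
Qed.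

Lemma count_slot (x : T) :
  Rmult (INR #|T|) (\big[Rplus/0%R]_(s : {perm T}) (if (s^-1)%g x \in slots then 1 else 0)%R)
  = Rmult (INR #|slots|) (INR #|{perm T}|).
Proof.
pose c := fun y => \big[Rplus/0%R]_(s : {perm T}) (if (s^-1)%g x == y then 1 else 0)%R.
have Hc : forall y, c y = c x.
  move=> y; rewrite /c (sum_perm_mul (tperm x y)); apply: eq_bigr => s _.
  by rewrite invgM tpermV permM tperm_eq_x.
have Hsum : \big[Rplus/0%R]_(y : T) c y = INR #|{perm T}|.
  rewrite /c exchange_big /= -[RHS]Rmult_1_r -sumR_constT; apply: eq_bigr => s _.
  by rewrite sum_ind_eq.
have Hsum2 : \big[Rplus/0%R]_(s : {perm T}) (if (s^-1)%g x \in slots then 1 else 0)%R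
   = \big[Rplus/0%R]_(y in slots) c y.
  rewrite /c exchange_big /=; apply: eq_bigr => s _.
  by rewrite (sum_ind_eq (fun y => y \in slots)).
rewrite Hsum2 (eq_bigr _ (fun y _ => Hc y)) sumR_const.
move: Hsum; rewrite (eq_bigr _ (fun y _ => Hc y)) sumR_constT => <-.
by rewrite -!Rmult_assoc (Rmult_comm (INR #|T|)).
Qed.

Lemma opt_sum (B : {set T}) :
  Rge (Rmult (INR #|T|) (\big[Rplus/0%R]_(s : {perm T}) v (B :&: prefix_set s m.+1)))
      (INR #|slots| * INR #|{perm T}| * (v B - v set0) + INR #|T| * INR #|{perm T}| * v set0)%R.
Proof.
elim: {B}#|B| {-2}B (eqxx #|B|) => [|k IH] B HB.
  rewrite cards_eq0 in HB; rewrite (eqP HB).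
  under eq_bigr => s _ do rewrite set0I.
  rewrite sumR_constT; apply: Rle_ge; apply: Req_le.
  have -> : (v set0 - v set0 = 0)%R by ring.
  by rewrite Rmult_0_r Rplus_0_l Rmult_assoc.
have [x Hx] : exists x, x \in B.
  by apply/set0Pn; rewrite -card_gt0 (eqP HB).
have HB' : #|B :\ x| == k by rewrite (cardsD1 x B) Hx add1n eqSS in HB.
have IH' := IH _ HB'.
set B' := B :\ x in IH' *.
have HxB' : x \notin B' by rewrite setD11.
have EB : B = x |: B' by rewrite /B' setD1K.
have Hpt : forall s : {perm T},
  Rle (v (B' :&: prefix_set s m.+1) + (v B - v B') * (if (s^-1)%g x \in slots then 1 else 0))%R
      (v (B :&: prefix_set s m.+1)).
  move=> s.
  have Hmem : (x \in prefix_set s m.+1) = ((s^-1)%g x \in slots) by rewrite !inE.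
  case: (boolP (x \in prefix_set s m.+1)) => Hq; rewrite -Hmem ?Hq ?(negbTE Hq).
  - have -> : B :&: prefix_set s m.+1 = x |: (B' :&: prefix_set s m.+1).
      apply/setP => w; rewrite EB !inE; case: eqP => [->|_] //=; by move: Hq; rewrite inE.
    have := Hsub (subsetIl B' (prefix_set s m.+1)) HxB'.
    rewrite -EB; lra.
  - have -> : B :&: prefix_set s m.+1 = B' :&: prefix_set s m.+1.
      apply/setP => w; rewrite EB !inE; case: eqP => [->|_] //=; by move: Hq; rewrite inE => /negbTE.
    lra.
have Hs := sumR_le (P := predT) (fun s _ => Hpt s).
rewrite sumR_split sumR_scale in Hs.
have Hcnt := count_slot x.
have Hslot : (INR #|slots| <= INR #|T|)%R.
  by apply: le_INR; apply/leP; apply: max_card.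
set S1 := \big[Rplus/0%R]_(s : {perm T}) v (B :&: prefix_set s m.+1) in Hs *.
set S2 := \big[Rplus/0%R]_(s : {perm T}) v (B' :&: prefix_set s m.+1) in Hs IH' *.
set I := \big[Rplus/0%R]_(s : {perm T}) (if (s^-1)%g x \in slots then 1 else 0)%R in Hs Hcnt.
set n := INR #|T| in Hcnt Hslot IH' *.
set p := INR #|slots| in Hcnt Hslot IH' *.
set N := INR #|{perm T}| in Hcnt IH' *.
have Hn : (0 <= n)%R by apply: pos_INR.
have E : (n * ((v B - v B') * I) = (v B - v B') * (p * N))%R by rewrite -Hcnt; ring.
apply: Rle_ge.
have H1 : (n * S2 + n * ((v B - v B') * I) <= n * S1)%R.
  have := Rmult_le_compat_l n _ _ Hn Hs; lra.
lra.
Qed.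

End Swap.
End Comb.

Fixpoint hs (m d : nat) : R :=
  match d with 0 => 0%R | d'.+1 => (/ INR m + hs m.+1 d')%R end.

Lemma hs_ge0 m d : (0 <= hs m d)%R.
Proof.
elim: d m => [|d IH] m /=; first lra.
have := IH m.+1; have : (0 <= / INR m)%R.
  case: m => [|m]; first by rewrite Rinv_0; lra.
  apply: Rlt_le; apply: Rinv_0_lt_compat; apply: lt_0_INR; lia.
lra.
Qed.

Lemma hs_exp m d : 1 <= m -> (INR (m + d) <= INR m * exp (hs m d))%R.
Proof.
elim: d m => [|d IH] m Hm /=.
  by rewrite addn0 exp_0; lra.
have Hm0 : (0 < INR m)%R by apply: lt_0_INR; apply/ltP.
have := IH m.+1 isT.
rewrite exp_plus.
have He := exp_ineq1_le (/ INR m).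
have Hp := exp_pos (hs m.+1 d).
have -> : m + d.+1 = m.+1 + d by rewrite addnS addSn.
have Hmm : (INR m * (1 + / INR m) = INR m.+1)%R.
  rewrite S_INR; field; lra.
move=> H1.
have H2 : (INR m * (1 + / INR m) * exp (hs m.+1 d) <= INR m * exp (/ INR m) * exp (hs m.+1 d))%R.
  apply: Rmult_le_compat_r; first lra.
  apply: Rmult_le_compat_l; lra.
rewrite Hmm in H2.
rewrite -Rmult_assoc; lra.
Qed.

Lemma ceil_facts (x : R) : (0 < x)%R ->
  (x <= INR (ceil_nat x))%R /\ (INR (ceil_nat x) < x + 1)%R /\ 1 <= ceil_nat x.
Proof.
move=> Hx; rewrite /ceil_nat.
have [H1 H2] := archimed (- x).
set u := up (- x) in H1 H2 *.
have Hz : (x <= IZR (1 - u))%R by rewrite minus_IZR; lra.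
have Hz2 : (IZR (1 - u) < x + 1)%R by rewrite minus_IZR; lra.
have Hpos : (0 < 1 - u)%Z by apply: lt_IZR; lra.
have E : INR (Z.to_nat (1 - u)) = IZR (1 - u).
  by rewrite INR_IZR_INZ Znat.Z2Nat.id //; lia.
rewrite E; split; [lra|split; first lra].
by apply/leP; lia.
Qed.

Lemma sumR_sub (I : finType) (F G : I -> R) :
  \big[Rplus/0%R]_(i : I) (F i - G i)%R =
  (\big[Rplus/0%R]_(i : I) F i - \big[Rplus/0%R]_(i : I) G i)%R.
Proof.
rewrite /Rminus sumR_split; congr (_ + _)%R.
transitivity (\big[Rplus/0%R]_(i : I) ((-1) * G i)%R).
  by apply: eq_bigr => i _; ring.
rewrite sumR_scale; ring.
Qed.

Theorem mainTheorem2 (T : finType) (k : nat) (v : {set T} -> R)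
  (A : {set T} -> {set T}) (alpha : R) (OPT : {set T}) :
  0 < #|T| ->
  0 < k ->
  (forall S, Rle 0 (v S)) ->
  monotone_fn v ->
  submodular_fn v ->
  #|OPT| <= k ->
  (forall S : {set T}, #|S| <= k -> Rle (v S) (v OPT)) ->
  Rlt 0 alpha -> Rle alpha 1 ->
  (forall L : {set T}, A L \subset L /\ #|A L| <= k /\
     forall S : {set T}, S \subset L -> #|S| <= k ->
       Rle (Rmult alpha (v S)) (v (A L))) ->
  Rle (Rmult (Rminus (Rdiv alpha (exp 1)) (Rdiv alpha (INR #|T|))) (v OPT))
      (expect_perm (fun s => v (tentative A (ceil_nat (Rdiv (INR #|T|) (exp 1))) s))).
Proof.
move=> Hn Hk Hv0 Hmon Hsub HOPT Hopt Ha0 Ha1 HA.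
have HAsub : forall L, A L \subset L by move=> L; case: (HA L).
pose Y m := \big[Rplus/0%R]_(s : {perm T}) v (tsuf A s m).
have HY0 : forall m, (0 <= Y m)%R by move=> m; apply: sumR_ge0 => s _.
have HN : (0 < INR #|{perm T}|)%R.
  apply: lt_0_INR; apply/ltP; apply/card_gt0P; by exists 1%g.
have Hn0 : (0 < INR #|T|)%R by apply: lt_0_INR; apply/ltP.
have HV : (0 <= v OPT)%R by [].
pose K := (alpha * INR #|{perm T}| * v OPT / INR #|T|)%R.
have HK0 : (0 <= K)%R.
  rewrite /K /Rdiv; apply: Rmult_le_pos; last by apply: Rlt_le; apply: Rinv_0_lt_compat.
  apply: Rmult_le_pos => //; apply: Rmult_le_pos; lra.
have HKn : (K * INR #|T| = alpha * INR #|{perm T}| * v OPT)%R by rewrite /K; field; lra.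
have Hrec : forall m, m < #|T| ->
    (INR m * Y m.+1 + INR m.+1 * K <= INR m.+1 * Y m)%R.
  move=> m Hm.
  have Hst := step_gain Hm Hmon Hsub HAsub.
  rewrite !sumR_sub in Hst.
  have Hopt1 := opt_sum m Hsub OPT.
  rewrite (card_slots Hm) in Hopt1.
  have HAL : (alpha * \big[Rplus/0%R]_(s : {perm T}) v (OPT :&: prefix_set s m.+1)
              <= \big[Rplus/0%R]_(s : {perm T}) v (A (prefix_set s m.+1)))%R.
    rewrite -sumR_scale; apply: sumR_le => s _.
    case: (HA (prefix_set s m.+1)) => _ [_ H]; apply: H; first exact: subsetIr.
    apply: leq_trans HOPT; apply: subset_leq_card; exact: subsetIl.
  set SO := \big[Rplus/0%R]_(s : {perm T}) v (OPT :&: prefix_set s m.+1) in Hopt1 HAL.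
  set SA := \big[Rplus/0%R]_(s : {perm T}) v (A (prefix_set s m.+1)) in Hst HAL.
  have Hmn : (INR m.+1 <= INR #|T|)%R by apply: le_INR; apply/leP.
  have Hv00 := Hv0 set0.
  have H3 : (INR m.+1 * (alpha * INR #|{perm T}| * v OPT) <= alpha * (INR #|T| * SO))%R.
    have H4 : (INR m.+1 * INR #|{perm T}| * v OPT <= INR #|T| * SO)%R.
      have : (0 <= (INR #|T| - INR m.+1) * INR #|{perm T}| * v set0)%R.
        apply: Rmult_le_pos => //; apply: Rmult_le_pos; lra.
      lra.
    have := Rmult_le_compat_l alpha _ _ (Rlt_le _ _ Ha0) H4; lra.
  have H5 : (INR m.+1 * K <= SA)%R.
    apply: (Rmult_le_reg_l (INR #|T|)) => //.
    have -> : (INR #|T| * (INR m.+1 * K) = INR m.+1 * (alpha * INR #|{perm T}| * v OPT))%R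
      by rewrite -HKn; ring.
    have := Rmult_le_compat_l (INR #|T|) _ _ (Rlt_le _ _ Hn0) HAL; lra.
  rewrite -/(Y m) -/(Y m.+1) in Hst *.
  have Hs : INR m.+1 = (INR m + 1)%R by apply: S_INR.
  rewrite Hs in Hst H5 *; apply Rge_le in Hst; nra.
have Hind : forall d m, m + d = #|T| -> (K * INR m * hs m d <= Y m)%R.
  elim=> [|d IH] m Hmd.
    by rewrite /= Rmult_0_r.
  have Hm : m < #|T| by rewrite -Hmd addnS ltnS leq_addr.
  have HI0 : m.+1 + d = #|T| by rewrite addSn -addnS.
  have := IH _ HI0.
  have := Hrec m Hm.
  rewrite S_INR /=.
  have Hh := hs_ge0 m.+1 d.
  have Hm0 := pos_INR m.
  set h := hs m.+1 d; set a := INR m.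
  move=> Hr HI.
  have Haa : (0 <= a)%R by apply: pos_INR.
  have H1 : (a * (K * (a + 1) * h) <= a * Y m.+1)%R by apply: Rmult_le_compat_l.
  have H2 : (K * a * h + K <= Y m)%R.
    apply: (Rmult_le_reg_l (a + 1)); first lra.
    have -> : ((a + 1) * (K * a * h + K) = a * (K * (a + 1) * h) + (a + 1) * K)%R by ring.
    lra.
  have H3 : (K * a * / a <= K)%R.
    case: (Req_dec a 0) => [->|Ha]; first by rewrite Rmult_0_r Rmult_0_l.
    rewrite Rmult_assoc Rinv_r //; lra.
  nra.
set E := exp 1.
have HE1 : (2 < E)%R by have := exp_ineq1 1 ltac:(lra); rewrite /E; lra.
set x := (INR #|T| / E)%R.
have Hx0 : (0 < x)%R by rewrite /x /Rdiv; apply: Rmult_lt_0_compat => //; apply: Rinv_0_lt_compat; lra.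
have Hxn : (x < INR #|T|)%R.
  rewrite /x; apply: (Rmult_lt_reg_r E); first lra.
  rewrite /Rdiv Rmult_assoc Rinv_l; nra.
have [Hc1 [Hc2 Hc3]] := ceil_facts Hx0.
set c := ceil_nat x in Hc1 Hc2 Hc3 *.
rewrite /expect_perm.
under eq_bigr => s _ do rewrite tentative_tsuf.
rewrite -/(Y c.-1).
have Ec : c = c.-1.+1 by rewrite prednK.
set m0 := c.-1 in Ec *.
have Hm0R : (INR m0 = INR c - 1)%R by rewrite Ec S_INR; lra.
have Hm0n : m0 < #|T|.
  apply/ltP; apply: INR_lt; lra.
have HY := Hind (#|T| - m0) m0 (subnKC (ltnW Hm0n)).
have HYK : (K * INR m0 <= Y m0)%R.
  case: (posnP m0) => [E0|Hpos].
    by rewrite E0 Rmult_0_r; apply: HY0.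
  have Hm0p : (0 < INR m0)%R by apply: lt_0_INR; apply/ltP.
  have Hh1 : (1 <= hs m0 (#|T| - m0))%R.
    have He := hs_exp (#|T| - m0) Hpos.
    rewrite subnKC in He; last exact: ltnW.
    have Hlt : (INR m0 * E < INR #|T|)%R.
      have : (INR m0 < x)%R by lra.
      rewrite /x => H; apply: (Rmult_lt_reg_r (/ E)); first (apply: Rinv_0_lt_compat; lra).
      rewrite Rmult_assoc Rinv_r; lra.
    case: (Rlt_le_dec (hs m0 (#|T| - m0)) 1) => // Hlt1.
    have := exp_increasing _ _ Hlt1; rewrite -/E => Hex.
    have := Rmult_lt_compat_l (INR m0) _ _ Hm0p Hex; lra.
  have : (K * INR m0 * 1 <= K * INR m0 * hs m0 (#|T| - m0))%R.
    apply: Rmult_le_compat_l => //; nra.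
  lra.
have Hfin : (alpha * v OPT * INR m0 / INR #|T| <= Y m0 / INR #|{perm T}|)%R.
  apply: (Rmult_le_reg_l (INR #|{perm T}|)) => //.
  have -> : (INR #|{perm T}| * (Y m0 / INR #|{perm T}|) = Y m0)%R by field; lra.
  have -> : (INR #|{perm T}| * (alpha * v OPT * INR m0 / INR #|T|) = K * INR m0)%R.
    rewrite /K; field; lra.
  exact: HYK.
apply: Rle_trans Hfin.
have Hcoef : (0 <= alpha * v OPT / INR #|T|)%R.
  rewrite /Rdiv; apply: Rmult_le_pos; last by apply: Rlt_le; apply: Rinv_0_lt_compat.
  apply: Rmult_le_pos; lra.
have Hm0x : (x - 1 <= INR m0)%R by lra.
have := Rmult_le_compat_l _ _ _ Hcoef Hm0x.
have -> : (alpha * v OPT / INR #|T| * (x - 1) = (alpha / E - alpha / INR #|T|) * v OPT)%R.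
  rewrite /x; field; lra.
have -> : (alpha * v OPT / INR #|T| * INR m0 = alpha * v OPT * INR m0 / INR #|T|)%R.
  field; lra.
done.
Qed.
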